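(* Let $H=\{H_a\}_{a\in\alpha}$ be an $\alpha$-family of subgroups of $\pi$. If two nanowords over $\alpha$ are homotopic, then their $H$-coverings are homotopic.
   Context: Fix a set $\alpha$ with an involution $\tau$. An $\alpha$-alphabet is a set $\mathcal A$ with a map $A\mapsto|A|\in\alpha$. A nanoword over $\alpha$ is a pair $(\mathcal A,w)$ with $\mathcal A$ a finite $\alpha$-alphabet and $w$ a word in which each letter occurs exactly twice. Nanowords are isomorphic if a bijection of alphabets preserving $|\cdot|$ carries one word letterwise to the other. Homotopy moves ($x,y,z,t$ words in the remaining letters; smaller alphabets carry the restricted projection): (1) $(\mathcal A,xAAy)\mapsto(\mathcal A\setminus\{A\},xy)$; (2) $(\mathcal A,xAByBAz)\mapsto(\mathcal A\setminus\{A,B\},xyz)$ if $|B|=\tau(|A|)$; (3) $(\mathcal A,xAByACzBCt)\mapsto(\mathcal A,xBAyCAzCBt)$ if $A,B,C$ distinct with $|A|=|B|=|C|$. Homotopy is generated by isomorphisms, these moves and their inverses. Let $\pi$ be the multiplicative abelian group generated by the elements of $\alpha$ with relations $a\,\tau(a)=1$. For $A,B\in\mathcal A$ let $n_w(A,B)=1$ if $w=\cdots A\cdots B\cdots A\cdots B\cdots$, $-1$ if $w=\cdots B\cdots A\cdots B\cdots A\cdots$, and $0$ otherwise, and $[A]_w=\prod_{B\in\mathcal A}|B|^{n_w(A,B)}\in\pi$. An $\alpha$-family of subgroups of $\pi$ is a family $\{H_a\subset\pi\}_{a\in\alpha}$ of subgroups with $H_a=H_{\tau(a)}$ for all $a$.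 The $H$-covering of $(\mathcal A,w)$ is the nanoword $(\mathcal A^H,w^H)$ obtained by deleting from both $\mathcal A$ and $w$ all letters $A$ with $[A]_w\notin H_{|A|}$. *)

(* Defs.v *)
From HB Require Import structures.
From mathcomp Require Import all_boot all_order all_algebra.
From mathcomp Require Import generic_quotient.
From mathcomp Require Import freeg.
From Stdlib Require Import ClassicalEpsilon Relation_Operators.

Set Implicit Arguments.
Unset Strict Implicit.
Unset Printing Implicit Defensive.

Import Order.TTheory GRing.Theory Num.Theory.
Local Open Scope ring_scope.
Local Open Scope quotient_scope.

Definition pb (P : Prop) : bool :=
  if excluded_middle_informative P then true else false.

Lemma pbP (P : Prop) : reflect P (pb P).
Proof. by rewrite /pb; case: excluded_middle_informative => h; constructor. Qed.

(* The group pi = < alpha | a tau(a) = 1 > (abelian), written          *)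
(* additively: the free abelian group F = {freeg alpha} on alpha,      *)
(* modulo the subgroup N generated by the elements <<a>> + <<tau a>>.  *)
Section Pi.
Variables (alpha : choiceType) (tau : alpha -> alpha).

Definition FA := {freeg alpha / int}.

Definition relgen (a : alpha) : FA := << a >> + << tau a >>.

Definition inN (x : FA) : Prop :=
  exists s t : seq alpha,
    x = \sum_(a <- s) relgen a - \sum_(a <- t) relgen a.

Definition pirel (x y : FA) : bool := pb (inN (x - y)).

Lemma pirel_refl : reflexive pirel.
Proof.
move=> x; apply/pbP; exists [::], [::].
by rewrite subrr !big_nil subrr.
Qed.

Lemma pirel_sym : symmetric pirel.
Proof.
suff H : forall x y, pirel x y -> pirel y x.
  by move=> x y; apply/idP/idP; apply: H.
move=> x y /pbP [s [t e]]; apply/pbP; exists t, s.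
by rewrite -opprB e opprB.
Qed.

Lemma pirel_trans : transitive pirel.
Proof.
move=> y x z /pbP [s1 [t1 e1]] /pbP [s2 [t2 e2]]; apply/pbP.
exists (s1 ++ s2), (t1 ++ t2).
have -> : x - z = (x - y) + (y - z) by rewrite addrA subrK.
by rewrite e1 e2 !big_cat /= opprD addrACA.
Qed.

Canonical pirel_equiv := EquivRel pirel pirel_refl pirel_sym pirel_trans.

Definition pigrp := {eq_quot pirel}.

Definition to_pi (x : FA) : pigrp := \pi_pigrp x.
Definition pi_one : pigrp := to_pi 0.
Definition pi_mul (u v : pigrp) : pigrp := to_pi (repr u + repr v).
Definition pi_inv (u : pigrp) : pigrp := to_pi (- repr u).

Definition gen (a : alpha) : pigrp := to_pi << a >>.

Definition is_subgroup (H : pred pigrp) : Prop :=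
  [/\ pi_one \in H,
      forall u v, u \in H -> v \in H -> pi_mul u v \in H &
      forall u, u \in H -> pi_inv u \in H].

Definition alpha_family (H : alpha -> pred pigrp) : Prop :=
  (forall a, is_subgroup (H a)) /\ (forall a, H a = H (tau a)).

End Pi.

(* Nanowords.  Letters are natural numbers; a nanoword is a word       *)
(* w : seq nat together with a projection p : nat -> alpha; its        *)
(* alphabet is the (finite) set of letters occurring in w, on which    *)
(* p restricts to the map A |-> |A|.  Every finite alpha-alphabet is   *)
(* isomorphic to one of this form.                                      *)
Section Nanowords.
Variables (alpha : choiceType) (tau : alpha -> alpha).

Record nanoword := Nanoword { nw_word : seq nat; nw_proj : nat -> alpha }.

Definition is_nanoword (u : nanoword) : bool :=
  all (fun A => count_mem A (nw_word u) == 2%N) (nw_word u).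

Definition nw_iso (u v : nanoword) : Prop :=
  exists f : nat -> nat,
    [/\ {in nw_word u &, injective f},
        map f (nw_word u) = nw_word v &
        {in nw_word u, forall A, nw_proj v (f A) = nw_proj u A}].

Definition move1 (u v : nanoword) : Prop :=
  nw_proj v = nw_proj u /\
  exists (x y : seq nat) (A : nat),
    nw_word u = x ++ [:: A; A] ++ y /\ nw_word v = x ++ y.

Definition move2 (u v : nanoword) : Prop :=
  nw_proj v = nw_proj u /\
  exists (x y z : seq nat) (A B : nat),
    [/\ nw_word u = x ++ [:: A; B] ++ y ++ [:: B; A] ++ z,
        nw_word v = x ++ y ++ z &
        nw_proj u B = tau (nw_proj u A)].

Definition move3 (u v : nanoword) : Prop :=
  nw_proj v = nw_proj u /\
  exists (x y z t : seq nat) (A B C : nat),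
    [/\ nw_word u = x ++ [:: A; B] ++ y ++ [:: A; C] ++ z ++ [:: B; C] ++ t,
        nw_word v = x ++ [:: B; A] ++ y ++ [:: C; A] ++ z ++ [:: C; B] ++ t,
        [/\ A != B, A != C & B != C] &
        nw_proj u A = nw_proj u B /\ nw_proj u B = nw_proj u C].

Definition nw_step (u v : nanoword) : Prop :=
  [/\ is_nanoword u, is_nanoword v &
      [\/ nw_iso u v, move1 u v, move2 u v | move3 u v]].

Definition homotopic : nanoword -> nanoword -> Prop :=
  clos_refl_sym_trans nanoword nw_step.

Definition nw_n (w : seq nat) (A B : nat) : int :=
  if subseq [:: A; B; A; B] w then 1
  else if subseq [:: B; A; B; A] w then -1 else 0.

Definition letter_class (u : nanoword) (A : nat) : pigrp tau :=
  to_pi tau (\sum_(B <- undup (nw_word u)) << nw_n (nw_word u) A B *g nw_proj u B >>).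

Definition covering (H : alpha -> pred (pigrp tau)) (u : nanoword) : nanoword :=
  Nanoword
    (filter (fun A => letter_class u A \in H (nw_proj u A)) (nw_word u))
    (nw_proj u).

End Nanowords.

(* Main.v *)
Require Import Defs.
From mathcomp Require Import all_boot all_order all_algebra generic_quotient freeg.
From Stdlib Require Import ClassicalEpsilon Relation_Operators.
From mathcomp Require Import zify.
Set Implicit Arguments.
Unset Strict Implicit.
Unset Printing Implicit Defensive.
Import Order.TTheory GRing.Theory Num.Theory.
Local Open Scope ring_scope.
Local Open Scope quotient_scope.

Definition flt (X D : nat) (w : seq nat) := [seq y <- w | y \in [:: X; D]].
Definition pat (a b c X D : nat) := nseq a D ++ X :: nseq b D ++ X :: nseq c D.
Definition fv (b c : nat) : int := if b == 1%N then (if c == 1%N then 1 else -1) else 0.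

Lemma nw_n_flt w X D : nw_n w X D = nw_n (flt X D w) X D.
Proof.
by rewrite /nw_n /flt !subseq_filter /= !inE !eqxx /= !orbT.
Qed.

Lemma flt_sym w X D : flt X D w = flt D X w.
Proof. by apply: eq_filter => y; rewrite !inE orbC. Qed.

Lemma flt_cat X D s t : flt X D (s ++ t) = flt X D s ++ flt X D t.
Proof. exact: filter_cat. Qed.

Lemma nw_n_pat a b c X D : X != D -> (a + b + c = 2)%N ->
  nw_n (pat a b c X D) X D = fv b c /\ nw_n (pat a b c X D) D X = - fv b c.
Proof.
move=> nXD habc.
have hXD : (X == D) = false by apply/negbTE.
have hDX : (D == X) = false by rewrite eq_sym.
case: a b c habc => [|[|[|a]]] [|[|[|b]]] [|[|[|c]]] //= _;
 rewrite /nw_n /fv /pat /=; do ?(rewrite /= ?eqxx ?hXD ?hDX); by [].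
Qed.

Lemma nw_n_notinr w X D : D \notin w -> nw_n w X D = 0.
Proof.
move=> hD; rewrite /nw_n.
have h1 : subseq [:: X; D; X; D] w = false.
  by apply/negbTE/negP => /mem_subseq /(_ D); rewrite !inE eqxx orbT => /(_ isT); apply/negP.
have h2 : subseq [:: D; X; D; X] w = false.
  by apply/negbTE/negP => /mem_subseq /(_ D); rewrite !inE eqxx => /(_ isT); apply/negP.
by rewrite h1 h2.
Qed.

Lemma nw_n_notinl w X D : X \notin w -> nw_n w X D = 0.
Proof.
move=> hD; rewrite /nw_n.
have h1 : subseq [:: X; D; X; D] w = false.
  by apply/negbTE/negP => /mem_subseq /(_ X); rewrite !inE eqxx => /(_ isT); apply/negP.
have h2 : subseq [:: D; X; D; X] w = false.
  by apply/negbTE/negP => /mem_subseq /(_ X); rewrite !inE eqxx orbT => /(_ isT); apply/negP.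
by rewrite h1 h2.
Qed.

Lemma nw_n_XX w X : (count_mem X w = 2)%N -> nw_n w X X = 0.
Proof.
move=> hc; rewrite /nw_n.
have h1 : subseq [:: X; X; X; X] w = false.
  apply/negbTE/negP => /(leq_count_subseq (pred1 X)); rewrite hc /= eqxx.
  by [].
by rewrite h1.
Qed.

Lemma flt_seg s X D : X \notin s -> flt X D s = nseq (count_mem D s) D.
Proof.
move=> hX; rewrite /flt.
have -> : [seq y <- s | y \in [:: X; D]] = [seq y <- s | y == D].
  apply: eq_in_filter => y ys; rewrite !inE.
  by case: eqP => // e; move: hX; rewrite -e ys.
have : all (pred1 D) [seq y <- s | y == D].
  by apply/allP => y; rewrite mem_filter => /andP [].
by move/all_pred1P => {1}->; rewrite size_filter.
Qed.

Section PiL.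
Context (alpha : choiceType) (tau : alpha -> alpha).

Lemma inN0 : inN tau 0.
Proof. by exists [::], [::]; rewrite !big_nil subrr. Qed.

Lemma inND x y : inN tau x -> inN tau y -> inN tau (x + y).
Proof.
move=> [s1 [t1 ->]] [s2 [t2 ->]]; exists (s1 ++ s2), (t1 ++ t2).
by rewrite !big_cat /= opprD addrACA.
Qed.

Lemma inNN x : inN tau x -> inN tau (- x).
Proof. by move=> [s [t ->]]; exists t, s; rewrite opprB. Qed.

Lemma inN_rel a (k : int) : k \in [:: 1; -1; 0] ->
  inN tau (<< k *g a >> + << k *g tau a >>).
Proof.
rewrite !inE => /or3P [] /eqP ->.
- by exists [:: a], [::]; rewrite big_seq1 big_nil subr0.
- by exists [::], [:: a]; rewrite big_seq1 big_nil sub0r /relgen opprD -!freegUN.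
- by rewrite !freegU0 addr0; apply: inN0.
Qed.

Lemma to_pi_eq x y : inN tau (x - y) -> to_pi tau x = to_pi tau y.
Proof. by move=> h; apply/eqquotP; apply/pbP. Qed.

Lemma to_pi_inv x y : to_pi tau x = to_pi tau y -> inN tau (x - y).
Proof. by move/eqquotP => /pbP. Qed.

Lemma repr_to_pi x : inN tau (repr (to_pi tau x) - x).
Proof. by apply: to_pi_inv; rewrite /to_pi reprK. Qed.

Lemma pi_mulE x y : Defs.pi_mul (to_pi tau x) (to_pi tau y) = to_pi tau (x + y).
Proof.
apply: to_pi_eq.
have -> : repr (to_pi tau x) + repr (to_pi tau y) - (x + y) =
  (repr (to_pi tau x) - x) + (repr (to_pi tau y) - y) by rewrite opprD addrACA.
by apply: inND; apply: repr_to_pi.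
Qed.

Lemma pi_invE x : Defs.pi_inv (to_pi tau x) = to_pi tau (- x).
Proof.
apply: to_pi_eq; rewrite -opprD; apply: inNN; exact: repr_to_pi.
Qed.

End PiL.

Lemma sum_sub (V : nmodType) (w s : seq nat) (F : nat -> V) :
  uniq s -> {subset w <= s} -> (forall B, B \notin w -> F B = 0) ->
  \sum_(B <- undup w) F B = \sum_(B <- s) F B.
Proof.
move=> us sws F0.
rewrite [RHS](bigID (fun B => B \in w)) /= [X in _ + X]big1 ?addr0; last by move=> B /F0.
have -> : \sum_(B <- s | B \in w) F B = \sum_(B <- [seq B <- s | B \in w]) F B.
  by rewrite big_filter.
apply: perm_big; apply: uniq_perm.
- exact: undup_uniq.
- exact: filter_uniq.
by move=> B; rewrite mem_undup mem_filter; case: (boolP (B \in w)) => // /sws ->.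
Qed.

Lemma split1 (V : nmodType) (s : seq nat) (F : nat -> V) A :
  uniq s -> A \in s ->
  \sum_(B <- s) F B = F A + \sum_(B <- s | B != A) F B.
Proof. by move=> us As; rewrite (bigD1_seq A). Qed.

Definition cls (alpha : choiceType) (w : seq nat) (p : nat -> alpha) X : FA alpha :=
  \sum_(B <- undup w) << nw_n w X B *g p B >>.

Lemma letter_classE (alpha : choiceType) (tau : alpha -> alpha) u X :
  letter_class tau u X = to_pi tau (cls (nw_word u) (nw_proj u) X).
Proof. by []. Qed.

Lemma cls_sub (alpha : choiceType) w (p : nat -> alpha) X s :
  uniq s -> {subset w <= s} ->
  cls w p X = \sum_(B <- s) << nw_n w X B *g p B >>.
Proof.
move=> us sws; apply: sum_sub => // B Bw.
by rewrite nw_n_notinr // freegU0.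
Qed.

Lemma nw_count (alpha : choiceType) (u : nanoword alpha) Z :
  is_nanoword u -> Z \in nw_word u -> count_mem Z (nw_word u) = 2%N.
Proof. by move=> /allP h /h /eqP. Qed.

Lemma count0 (s : seq nat) Z : count_mem Z s = 0%N -> Z \notin s.
Proof. by move/count_memPn. Qed.

Lemma cnt2 a b : (a + (1 + (1 + b)) = 2)%N -> a = 0%N /\ b = 0%N.
Proof. lia. Qed.

Lemma cnt0 a b : (a + (0 + (0 + b)) = 2)%N -> (a + 0 + b = 2)%N.
Proof. lia. Qed.

Lemma cntz a b : (a + b = 2)%N -> (a + 0 + b = 2)%N.
Proof. lia. Qed.

Lemma sum_split (V : nmodType) (s l : seq nat) (F : nat -> V) :
  uniq s -> uniq l -> {subset l <= s} ->
  \sum_(E <- s) F E = \sum_(E <- l) F E + \sum_(E <- s | E \notin l) F E.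
Proof.
move=> us ul sls; rewrite (bigID (fun E => E \in l)) /=; congr (_ + _).
rewrite -big_filter; apply: perm_big; apply: uniq_perm.
- exact: filter_uniq.
- exact: ul.
by move=> E; rewrite mem_filter; case: (boolP (E \in l)) => // /sls ->.
Qed.

Lemma fv_in b c : fv b c \in [:: 1; -1; 0].
Proof. by rewrite /fv; case: ifP => _; [case: ifP|]. Qed.

Lemma fvN_in b c : - fv b c \in [:: 1; -1; 0].
Proof. by rewrite /fv; case: ifP => _; [case: ifP|]. Qed.

Lemma cnt_m2 (x y z : seq nat) A B D : A != D -> B != D ->
  count_mem D (x ++ [:: A; B] ++ y ++ [:: B; A] ++ z) =
  (count_mem D x + count_mem D y + count_mem D z)%N.
Proof.
move=> /negbTE hA /negbTE hB; rewrite !count_cat /= hA hB /= !add0n addnA.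
by [].
Qed.

Lemma cnt3 a b c : (a + ((1 + (0 + 0)) + (b + ((0 + (1 + 0)) + c))) = 2)%N ->
  a = 0%N /\ b = 0%N /\ c = 0%N.
Proof. lia. Qed.

Lemma cnt_m2A (x y z : seq nat) A B :
  count_mem A (x ++ [:: A; B] ++ y ++ [:: B; A] ++ z) = 2%N ->
  A != B /\ [/\ A \notin x, A \notin y & A \notin z].
Proof.
rewrite !count_cat /= eqxx.
have [e|nBA] := eqVneq B A.
  by subst B; rewrite ?eqxx /=; lia.
move=> h; split; first by [].
by case/cnt3: h => /count_memPn -> [/count_memPn -> /count_memPn ->].
Qed.

Lemma cnt3' a b c : (a + ((0 + (1 + 0)) + (b + ((1 + (0 + 0)) + c))) = 2)%N ->
  a = 0%N /\ b = 0%N /\ c = 0%N.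
Proof. lia. Qed.

Lemma cnt_m2B (x y z : seq nat) A B : A != B ->
  count_mem B (x ++ [:: A; B] ++ y ++ [:: B; A] ++ z) = 2%N ->
  [/\ B \notin x, B \notin y & B \notin z].
Proof.
move=> /negbTE nAB; rewrite !count_cat /= eqxx nAB => h.
by case/cnt3': h => /count_memPn -> [/count_memPn -> /count_memPn ->].
Qed.

Lemma cnt0E (s : seq nat) X : X \notin s -> count_mem X s = 0%N.
Proof. by move/count_memPn. Qed.

Lemma nw_n_in w X Y : nw_n w X Y \in [:: 1; -1; 0].
Proof. by rewrite /nw_n; case: ifP => _; [|case: ifP]. Qed.


Lemma cnt_m3 (x y z t : seq nat) a b c d e f D :
  count_mem D (x ++ [:: a; b] ++ y ++ [:: c; d] ++ z ++ [:: e; f] ++ t) =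
  (count_mem D x + count_mem D y + count_mem D z + count_mem D t +
   ((a == D) + (b == D) + (c == D) + (d == D) + (e == D) + (f == D)))%N.
Proof.
rewrite !count_cat /=.
set k1 := count_mem D x. set k2 := count_mem D y. set k3 := count_mem D z. set k4 := count_mem D t.
lia.
Qed.

Lemma flt_swap D E a b : a != b -> a != D -> b != D ->
  flt D E [:: a; b] = flt D E [:: b; a].
Proof.
move=> nab /negbTE naD /negbTE nbD; rewrite /flt /= !inE naD nbD /=.
case: (eqVneq a E) => [e|naE]; case: (eqVneq b E) => [e'|nbE] //=.
by move: nab; rewrite e e' eqxx.
Qed.

Lemma filter_swap (K : pred nat) a b : ~~ (K a && K b) ->
  filter K [:: a; b] = filter K [:: b; a].
Proof. by rewrite /=; case: (K a); case: (K b). Qed.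

Lemma fv_add kx ky kz kt : (kx + ky + kz + kt = 2)%N ->
  fv (ky + kz) kt = fv ky (kz + kt) + fv kz kt.
Proof.
case: kx ky kz kt => [|[|[|?]]] [|[|[|?]]] [|[|[|?]]] [|[|[|?]]] //= _.
Qed.

Lemma nw_n_val w X Y a b c : X != Y -> (a + b + c = 2)%N ->
  flt X Y w = pat a b c X Y -> nw_n w X Y = fv b c /\ nw_n w Y X = - fv b c.
Proof.
move=> nXY habc e.
rewrite (nw_n_flt w X Y) (nw_n_flt w Y X) (flt_sym w Y X) e.
exact: nw_n_pat.
Qed.

Lemma abs4 (a b c d n : nat) : (a + b + c + d + n = 2)%N -> (2 <= n)%N ->
  [/\ a = 0%N, b = 0%N, c = 0%N & d = 0%N].
Proof. by move=> h1 h2; split; lia. Qed.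

Lemma abs4' (a b c d n : nat) : (a + b + c + d + n = 2)%N -> n = 0%N ->
  (a + b + c + d = 2)%N.
Proof. lia. Qed.


Lemma cnt0E' (s : seq nat) X : count_mem X s = 0%N -> X \notin s.
Proof. by move/count_memPn. Qed.

Lemma nw_n_val' w X Y a b c : flt X Y w = pat a b c X Y -> X != Y ->
  (a + b + c = 2)%N -> nw_n w X Y = fv b c /\ nw_n w Y X = - fv b c.
Proof. by move=> e nXY h; exact: (@nw_n_val w X Y a b c nXY h e). Qed.

Lemma A4 a b c d : (a + b + c + d = 2)%N -> (a + b + (c + d) = 2)%N.
Proof. lia. Qed.
Lemma B4 a b c d : (a + b + c + d = 2)%N -> (a + (b + c) + d = 2)%N.
Proof. lia. Qed.
Lemma C4 a b c d : (a + b + c + d = 2)%N -> (a + b + c + d = 2)%N.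
Proof. by []. Qed.

Section Main.
Context (alpha : choiceType) (tau : alpha -> alpha) (Htau : involutive tau)
  (H : alpha -> pred (pigrp tau)) (HH : alpha_family H).

Definition K (u : nanoword alpha) := fun A => letter_class tau u A \in H (nw_proj u A).

Lemma covE u : covering H u = Nanoword (filter (K u) (nw_word u)) (nw_proj u).
Proof. by []. Qed.

Lemma cov_nano u : is_nanoword u -> is_nanoword (covering H u).
Proof.
move=> /allP hu; apply/allP => A; rewrite covE /= mem_filter => /andP [KA Au].
rewrite count_filter.
have -> : count (predI (pred1 A) (K u)) (nw_word u) = count_mem A (nw_word u).
  by apply: eq_count => y /=; case: eqP => // ->; rewrite KA.
exact: hu.
Qed.


Lemma HK1 a : pi_one tau \in H a.
Proof. by case: (HH.1 a). Qed.

Lemma cov_move1 u v : is_nanoword u -> is_nanoword v -> move1 u v ->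
  nw_step tau (covering H u) (covering H v).
Proof.
move=> nu nv [epv [x [y [A [eu ev]]]]].
move: v nv epv ev => [wv pv] nv /= epv ev; subst pv wv.
have Au : A \in nw_word u by rewrite eu mem_cat !inE eqxx orbT.
have := nw_count nu Au; rewrite eu count_cat /= eqxx /= => cA.
have [Ax Ay] : A \notin x /\ A \notin y.
  by case/cnt2: cA => /count0 -> /count0 ->.
have Av : A \notin x ++ y by rewrite mem_cat negb_or Ax Ay.
have F1 : forall B, B \in nw_word u -> B != A -> nw_n (nw_word u) A B = 0.
  move=> B Bu nBA; rewrite nw_n_flt.
  have cB := nw_count nu Bu; rewrite eu count_cat /= (eq_sym A B) (negbTE nBA) in cB.
  have -> : flt A B (nw_word u) = pat (count_mem B x) 0 (count_mem B y) A B.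
    by rewrite eu !flt_cat (flt_seg _ Ax) (flt_seg _ Ay) /flt /= !inE !eqxx.
  have nAB : A != B by rewrite eq_sym.
  by have [-> _] := @nw_n_pat (count_mem B x) 0 (count_mem B y) A B nAB (cnt0 cB).
have KA : K u A.
  rewrite /K letter_classE.
  have -> : cls (nw_word u) (nw_proj u) A = 0.
    rewrite /cls big1_seq // => B /andP [_]; rewrite mem_undup => Bu.
    case: (eqVneq B A) => [->|nBA]; last by rewrite F1 // freegU0.
    by rewrite nw_n_XX ?freegU0 // (nw_count nu Au).
  exact: HK1.
have F3 : forall D, D \in x ++ y -> K u D = K (Nanoword (x ++ y) (nw_proj u)) D.
  move=> D Dv; rewrite /K !letter_classE /=.
  suff -> : cls (nw_word u) (nw_proj u) D = cls (x ++ y) (nw_proj u) D by [].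
  have nDA : D != A by apply/eqP => e; move: Av; rewrite -e Dv.
  rewrite [in RHS](cls_sub _ _ (s := undup (nw_word u))) /cls; first last.
  - by move=> z; rewrite mem_undup eu !mem_cat !inE => /orP [] ->; rewrite ?orbT.
  - exact: undup_uniq.
  apply: eq_big_seq => B; rewrite mem_undup => Bu; congr (<< _ *g _ >>).
  case: (eqVneq B A) => [->|nBA].
  - rewrite (nw_n_notinr _ Av) nw_n_flt flt_sym.
    have cD := nw_count nv Dv; rewrite count_cat in cD.
    have -> : flt A D (nw_word u) = pat (count_mem D x) 0 (count_mem D y) A D.
      by rewrite eu !flt_cat (flt_seg _ Ax) (flt_seg _ Ay) /flt /= !inE !eqxx.
    have nAD : A != D by rewrite eq_sym.
    by have [_ ->] := @nw_n_pat (count_mem D x) 0 (count_mem D y) A D nAD (cntz cD).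
  - rewrite nw_n_flt [in RHS]nw_n_flt; congr nw_n.
    by rewrite eu !flt_cat /flt /= !inE ![A == _]eq_sym (negbTE nDA) (negbTE nBA).
split; try exact: cov_nano.
apply: Or42; split; first by [].
exists (filter (K u) x), (filter (K u) y), A; split.
- by rewrite covE /= eu filter_cat /= KA.
- rewrite covE /= filter_cat; congr (_ ++ _); apply: eq_in_filter => D Dx;
  (rewrite F3 //; last by rewrite mem_cat Dx ?orbT).
Qed.


Lemma cov_move2 u v : is_nanoword u -> is_nanoword v -> move2 tau u v ->
  homotopic tau (covering H u) (covering H v).
Proof.
move=> nu nv [epv [x [y [z [A [B [eu ev epB]]]]]]].
move: v nv epv ev => [wv pv] nv /= epv ev; subst pv wv.
have Au : A \in nw_word u by rewrite eu !(mem_cat, inE) eqxx !orbT.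
have Bu : B \in nw_word u by rewrite eu !(mem_cat, inE) eqxx !orbT.
have := nw_count nu Au; rewrite {1}eu => /cnt_m2A [nAB [Ax Ay Az]].
have := nw_count nu Bu; rewrite {1}eu => /(cnt_m2B nAB) [Bx By Bz].
have hAB : (A == B) = false by apply/negbTE.
have hBA : (B == A) = false by rewrite eq_sym.
have cntD : forall D, D \in nw_word u -> D != A -> D != B ->
    (count_mem D x + count_mem D y + count_mem D z = 2)%N.
  move=> D Du nDA nDB; have := nw_count nu Du; rewrite {1}eu cnt_m2 //.
  - by rewrite eq_sym.
  - by rewrite eq_sym.
have nAD : forall D, D \in nw_word u -> D != A -> D != B ->
    nw_n (nw_word u) A D = nw_n (nw_word u) B D /\
    nw_n (nw_word u) D A = nw_n (nw_word u) D B.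
  move=> D Du nDA nDB.
  have hAD : (A == D) = false by rewrite eq_sym; apply/negbTE.
  have hBD : (B == D) = false by rewrite eq_sym; apply/negbTE.
  have e1 : flt A D (nw_word u) = pat (count_mem D x) (count_mem D y) (count_mem D z) A D.
    by rewrite eu !flt_cat (flt_seg _ Ax) (flt_seg _ Ay) (flt_seg _ Az) /flt /= !inE eqxx hBA hBD.
  have e2 : flt B D (nw_word u) = pat (count_mem D x) (count_mem D y) (count_mem D z) B D.
    by rewrite eu !flt_cat (flt_seg _ Bx) (flt_seg _ By) (flt_seg _ Bz) /flt /= !inE eqxx hAB hAD.
  rewrite (nw_n_flt (nw_word u) A D) (nw_n_flt (nw_word u) B D) (nw_n_flt (nw_word u) D A).
  rewrite (nw_n_flt (nw_word u) D B) (flt_sym _ D A) (flt_sym _ D B) e1 e2.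
  have [-> ->] := @nw_n_pat _ _ _ A D (negbT hAD) (cntD D Du nDA nDB).
  by have [-> ->] := @nw_n_pat _ _ _ B D (negbT hBD) (cntD D Du nDA nDB).
have nAB0 : nw_n (nw_word u) A B = 0 /\ nw_n (nw_word u) B A = 0.
  have e1 : flt A B (nw_word u) = pat 0 2 0 A B.
    rewrite eu !flt_cat (flt_seg _ Ax) (flt_seg _ Ay) (flt_seg _ Az).
    by rewrite !cnt0E // /flt /= !inE !eqxx /= !orbT.
  rewrite (nw_n_flt (nw_word u) A B) (nw_n_flt (nw_word u) B A) (flt_sym _ B A) e1.
  by have [-> ->] := @nw_n_pat 0 2 0 A B nAB erefl.
have clsAB : cls (nw_word u) (nw_proj u) A = cls (nw_word u) (nw_proj u) B.
  rewrite /cls; apply: eq_big_seq => D; rewrite mem_undup => Du; congr (<< _ *g _ >>).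
  have [->|nDA] := eqVneq D A.
    by rewrite nAB0.2 nw_n_XX // (nw_count nu Au).
  have [->|nDB] := eqVneq D B.
    by rewrite nAB0.1 nw_n_XX // (nw_count nu Bu).
  exact: (nAD D Du nDA nDB).1.
have KAB : K u A = K u B.
  by rewrite /K !letter_classE clsAB epB -(HH.2).
have F3 : forall D, D \in x ++ y ++ z -> K u D = K (Nanoword (x ++ y ++ z) (nw_proj u)) D.
  move=> D Dv; rewrite /K !letter_classE /=.
  have nDA : D != A.
    by apply/eqP => e; move: Dv; rewrite e !mem_cat (negbTE Ax) (negbTE Ay) (negbTE Az).
  have nDB : D != B.
    by apply/eqP => e; move: Dv; rewrite e !mem_cat (negbTE Bx) (negbTE By) (negbTE Bz).
  have Du : D \in nw_word u.
    by move: Dv; rewrite eu !mem_cat => /or3P [] ->; rewrite ?orbT.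
  suff -> : to_pi tau (cls (nw_word u) (nw_proj u) D) =
            to_pi tau (cls (x ++ y ++ z) (nw_proj u) D) by [].
  apply: to_pi_eq.
  rewrite [cls (x ++ y ++ z) _ _](cls_sub _ _ (s := undup (nw_word u))); first last.
  - by move=> E; rewrite mem_undup eu !mem_cat => /or3P [] ->; rewrite ?orbT.
  - exact: undup_uniq.
  rewrite /cls -sumrB (sum_split _ (l := [:: A; B])); first last.
  - by move=> E; rewrite !inE mem_undup => /orP [] /eqP ->.
  - by rewrite /= inE hAB.
  - exact: undup_uniq.
  rewrite [X in _ + X]big1; last first.
    move=> E; rewrite !inE negb_or => /andP [nEA nEB].
    suff -> : nw_n (nw_word u) D E = nw_n (x ++ y ++ z) D E by rewrite subrr.
    rewrite nw_n_flt [in RHS]nw_n_flt; congr nw_n.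
    have hAD : (A == D) = false by rewrite eq_sym; apply/negbTE.
    have hBD : (B == D) = false by rewrite eq_sym; apply/negbTE.
    have hAE : (A == E) = false by rewrite eq_sym; apply/negbTE.
    have hBE : (B == E) = false by rewrite eq_sym; apply/negbTE.
    by rewrite eu !flt_cat /flt /= !inE hAD hBD hAE hBE.
  have Av : A \notin x ++ y ++ z by rewrite !mem_cat (negbTE Ax) (negbTE Ay) (negbTE Az).
  have Bv : B \notin x ++ y ++ z by rewrite !mem_cat (negbTE Bx) (negbTE By) (negbTE Bz).
  rewrite !big_cons big_nil !(nw_n_notinr _ Av) !(nw_n_notinr _ Bv) !freegU0 !subr0 !addr0.
  rewrite -(nAD D Du nDA nDB).2 epB.
  by apply: inN_rel; apply: nw_n_in.
have F3' : forall s, {subset s <= x ++ y ++ z} ->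
    filter (K u) s = filter (K (Nanoword (x ++ y ++ z) (nw_proj u))) s.
  by move=> s ss; apply: eq_in_filter => D /ss; apply: F3.
have sx : {subset x <= x ++ y ++ z} by move=> D Dx; rewrite mem_cat Dx.
have sy : {subset y <= x ++ y ++ z} by move=> D Dy; rewrite !mem_cat Dy orbT.
have sz : {subset z <= x ++ y ++ z} by move=> D Dz; rewrite !mem_cat Dz !orbT.
have [KA|KA] := boolP (K u A).
- apply: rst_step; split; try exact: cov_nano.
  apply: Or43; split; first by [].
  exists (filter (K u) x), (filter (K u) y), (filter (K u) z), A, B; split.
  + by rewrite covE /= eu !filter_cat /= KA -KAB KA.
  + by rewrite covE /= !filter_cat (F3' x sx) (F3' y sy) (F3' z sz).
  + exact: epB.
- have -> : covering H u = covering H (Nanoword (x ++ y ++ z) (nw_proj u)).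
    rewrite !covE /= eu !filter_cat /= (negbTE KA) -KAB (negbTE KA) /=.
    by rewrite (F3' x sx) (F3' y sy) (F3' z sz).
  exact: rst_refl.
Qed.


Lemma cov_move3 u v : is_nanoword u -> is_nanoword v -> move3 u v ->
  homotopic tau (covering H u) (covering H v).
Proof.
move=> nu nv [epv [x [y [z [t [A [B [C [eu ev [nAB nAC nBC] [pAB pBC]]]]]]]]]].
move: v nv epv ev => [wv pv] nv /= epv ev; subst pv wv.
move: u nu nv eu pAB pBC => [w p] nu nv eu pAB pBC.
have {}eu : w = x ++ [:: A; B] ++ y ++ [:: A; C] ++ z ++ [:: B; C] ++ t := eu.
rewrite /= in pAB pBC.
set w' := x ++ [:: B; A] ++ y ++ [:: C; A] ++ z ++ [:: C; B] ++ t.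
have pw : perm_eq w w'.
  have sw : forall a b : nat, perm_eq [:: a; b] [:: b; a].
    by move=> a b; have := perm_catC [:: a] [:: b] [:: b; a]; rewrite perm_refl.
  rewrite eu /w'; do !(apply: perm_cat; first by (exact: perm_refl || exact: sw)); exact: perm_refl.
have memw : w =i w' by apply: perm_mem.
have hAB : (A == B) = false by apply/negbTE.
have hBA : (B == A) = false by rewrite eq_sym.
have hAC : (A == C) = false by apply/negbTE.
have hCA : (C == A) = false by rewrite eq_sym.
have hBC : (B == C) = false by apply/negbTE.
have hCB : (C == B) = false by rewrite eq_sym.
have absent : forall X, X \in [:: A; B; C] ->
    [/\ X \notin x, X \notin y, X \notin z & X \notin t].
  move=> X XA.
  have Xu : X \in w.
    by move: XA; rewrite eu !inE !mem_cat !inE => /or3P [] ->; rewrite ?orbT.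
  have := nw_count nu Xu; rewrite {1}eu cnt_m3 => /abs4 [].
  - by move: XA; rewrite !inE => /or3P [] /eqP ->; rewrite !eqxx ?hAB ?hBA ?hAC ?hCA ?hBC ?hCB.
  by move=> /cnt0E' -> /cnt0E' -> /cnt0E' -> /cnt0E' ->.
have [Ax Ay Az At] := absent A (mem_head _ _).
have iB : B \in [:: A; B; C] by rewrite !inE eqxx orbT.
have iC : C \in [:: A; B; C] by rewrite !inE eqxx !orbT.
have [Bx By Bz Bt] := absent B iB.
have [Cx Cy Cz Ct] := absent C iC.
have Au : A \in w by rewrite eu !(mem_cat, inE) eqxx /= ?orbT.
have Bu : B \in w by rewrite eu !(mem_cat, inE) eqxx /= ?orbT.
have Cu : C \in w by rewrite eu !(mem_cat, inE) eqxx /= ?orbT.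
move/permP: (pw) => cw.
have e1 : flt A B w = pat 0 1 1 A B by rewrite eu !flt_cat ?(flt_seg _ Ax) ?(flt_seg _ Ay) ?(flt_seg _ Az) ?(flt_seg _ At) ?(flt_seg _ Bx) ?(flt_seg _ By) ?(flt_seg _ Bz) ?(flt_seg _ Bt) ?(flt_seg _ Cx) ?(flt_seg _ Cy) ?(flt_seg _ Cz) ?(flt_seg _ Ct) ?cnt0E // /flt /= !inE !eqxx ?hAB ?hBA ?hAC ?hCA ?hBC ?hCB /= ?orbT ?orbF.
have e2 : flt A C w = pat 0 0 2 A C by rewrite eu !flt_cat ?(flt_seg _ Ax) ?(flt_seg _ Ay) ?(flt_seg _ Az) ?(flt_seg _ At) ?(flt_seg _ Bx) ?(flt_seg _ By) ?(flt_seg _ Bz) ?(flt_seg _ Bt) ?(flt_seg _ Cx) ?(flt_seg _ Cy) ?(flt_seg _ Cz) ?(flt_seg _ Ct) ?cnt0E // /flt /= !inE !eqxx ?hAB ?hBA ?hAC ?hCA ?hBC ?hCB /= ?orbT ?orbF.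
have e3 : flt B C w = pat 0 1 1 B C by rewrite eu !flt_cat ?(flt_seg _ Ax) ?(flt_seg _ Ay) ?(flt_seg _ Az) ?(flt_seg _ At) ?(flt_seg _ Bx) ?(flt_seg _ By) ?(flt_seg _ Bz) ?(flt_seg _ Bt) ?(flt_seg _ Cx) ?(flt_seg _ Cy) ?(flt_seg _ Cz) ?(flt_seg _ Ct) ?cnt0E // /flt /= !inE !eqxx ?hAB ?hBA ?hAC ?hCA ?hBC ?hCB /= ?orbT ?orbF.
have e4 : flt A B w' = pat 1 0 1 A B by rewrite /w' !flt_cat ?(flt_seg _ Ax) ?(flt_seg _ Ay) ?(flt_seg _ Az) ?(flt_seg _ At) ?(flt_seg _ Bx) ?(flt_seg _ By) ?(flt_seg _ Bz) ?(flt_seg _ Bt) ?(flt_seg _ Cx) ?(flt_seg _ Cy) ?(flt_seg _ Cz) ?(flt_seg _ Ct) ?cnt0E // /flt /= !inE !eqxx ?hAB ?hBA ?hAC ?hCA ?hBC ?hCB /= ?orbT ?orbF.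
have e5 : flt A C w' = pat 0 1 1 A C by rewrite /w' !flt_cat ?(flt_seg _ Ax) ?(flt_seg _ Ay) ?(flt_seg _ Az) ?(flt_seg _ At) ?(flt_seg _ Bx) ?(flt_seg _ By) ?(flt_seg _ Bz) ?(flt_seg _ Bt) ?(flt_seg _ Cx) ?(flt_seg _ Cy) ?(flt_seg _ Cz) ?(flt_seg _ Ct) ?cnt0E // /flt /= !inE !eqxx ?hAB ?hBA ?hAC ?hCA ?hBC ?hCB /= ?orbT ?orbF.
have e6 : flt B C w' = pat 0 2 0 B C by rewrite /w' !flt_cat ?(flt_seg _ Ax) ?(flt_seg _ Ay) ?(flt_seg _ Az) ?(flt_seg _ At) ?(flt_seg _ Bx) ?(flt_seg _ By) ?(flt_seg _ Bz) ?(flt_seg _ Bt) ?(flt_seg _ Cx) ?(flt_seg _ Cy) ?(flt_seg _ Cz) ?(flt_seg _ Ct) ?cnt0E // /flt /= !inE !eqxx ?hAB ?hBA ?hAC ?hCA ?hBC ?hCB /= ?orbT ?orbF.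
have [uAB uBA] := nw_n_val' e1 nAB erefl.
have [uAC uCA] := nw_n_val' e2 nAC erefl.
have [uBC uCB] := nw_n_val' e3 nBC erefl.
have [vAB vBA] := nw_n_val' e4 nAB erefl.
have [vAC vCA] := nw_n_val' e5 nAC erefl.
have [vBC vCB] := nw_n_val' e6 nBC erefl.
have outside : forall D, D \in w -> D \notin [:: A; B; C] ->
  [/\ nw_n w B D = nw_n w A D + nw_n w C D,
      forall E, nw_n w D E = nw_n w' D E &
      forall E, nw_n w E D = nw_n w' E D].
  move=> D Du; rewrite !inE !negb_or => /and3P [nDA nDB nDC].
  have hAD : (A == D) = false by rewrite eq_sym; apply/negbTE.
  have hBD : (B == D) = false by rewrite eq_sym; apply/negbTE.
  have hCD : (C == D) = false by rewrite eq_sym; apply/negbTE.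
  have flt_eq : forall E, flt D E w = flt D E w'.
    move=> E; rewrite eu /w' !flt_cat.
    rewrite (@flt_swap D E A B nAB (negbT hAD) (negbT hBD)).
    rewrite (@flt_swap D E A C nAC (negbT hAD) (negbT hCD)).
    by rewrite (@flt_swap D E B C nBC (negbT hBD) (negbT hCD)).
  split; first last.
  - by move=> E; rewrite (nw_n_flt w E D) (nw_n_flt w' E D) (flt_sym w E D) (flt_sym w' E D) flt_eq.
  - by move=> E; rewrite (nw_n_flt w D E) (nw_n_flt w' D E) flt_eq.
  have := nw_count nu Du; rewrite /= {1}eu cnt_m3 hAD hBD hCD => /abs4' /(_ erefl) cD.
  have eAD : flt A D w = pat (count_mem D x) (count_mem D y) (count_mem D z + count_mem D t) A D.
    by rewrite eu !flt_cat ?(flt_seg _ Ax) ?(flt_seg _ Ay) ?(flt_seg _ Az) ?(flt_seg _ At) ?(flt_seg _ Bx) ?(flt_seg _ By) ?(flt_seg _ Bz) ?(flt_seg _ Bt) ?(flt_seg _ Cx) ?(flt_seg _ Cy) ?(flt_seg _ Cz) ?(flt_seg _ Ct) /flt /= !inE !eqxx ?hBA ?hCA ?hBD ?hCD /= /pat nseqD -?catA.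
  have eBD : flt B D w = pat (count_mem D x) (count_mem D y + count_mem D z) (count_mem D t) B D.
    by rewrite eu !flt_cat ?(flt_seg _ Ax) ?(flt_seg _ Ay) ?(flt_seg _ Az) ?(flt_seg _ At) ?(flt_seg _ Bx) ?(flt_seg _ By) ?(flt_seg _ Bz) ?(flt_seg _ Bt) ?(flt_seg _ Cx) ?(flt_seg _ Cy) ?(flt_seg _ Cz) ?(flt_seg _ Ct) /flt /= !inE !eqxx ?hAB ?hCB ?hAD ?hCD /= /pat nseqD -?catA.
  have eCD : flt C D w = pat (count_mem D x + count_mem D y) (count_mem D z) (count_mem D t) C D.
    by rewrite eu !flt_cat ?(flt_seg _ Ax) ?(flt_seg _ Ay) ?(flt_seg _ Az) ?(flt_seg _ At) ?(flt_seg _ Bx) ?(flt_seg _ By) ?(flt_seg _ Bz) ?(flt_seg _ Bt) ?(flt_seg _ Cx) ?(flt_seg _ Cy) ?(flt_seg _ Cz) ?(flt_seg _ Ct) /flt /= !inE !eqxx ?hAC ?hBC ?hAD ?hBD /= /pat nseqD -?catA.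
  have [-> _] := nw_n_val' eAD (negbT hAD) (A4 cD).
  have [-> _] := nw_n_val' eBD (negbT hBD) (B4 cD).
  have [-> _] := nw_n_val' eCD (negbT hCD) (C4 cD).
  exact: fv_add cD.
have lu : uniq [:: A; B; C] by rewrite /= !inE hAB hAC hBC.
have ls : {subset [:: A; B; C] <= undup w}.
  by move=> E; rewrite mem_undup !inE => /or3P [] /eqP ->.
have clsw' : forall X, cls w' p X = \sum_(E <- undup w) << nw_n w' X E *g p E >>.
  move=> X; apply: cls_sub; first exact: undup_uniq.
  by move=> E; rewrite mem_undup memw.
have spl : forall w0 X, \sum_(E <- undup w) << nw_n w0 X E *g p E >> =
    (<< nw_n w0 X A *g p A >> + (<< nw_n w0 X B *g p B >> + (<< nw_n w0 X C *g p C >> + 0)))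
    + \sum_(E <- undup w | E \notin [:: A; B; C]) << nw_n w0 X E *g p E >>.
  by move=> w0 X; rewrite (sum_split _ (l := [:: A; B; C])) ?undup_uniq // !big_cons big_nil.
have cA : count_mem A w = 2%N by apply: nw_count nu Au.
have cB : count_mem B w = 2%N by apply: nw_count nu Bu.
have cC : count_mem C w = 2%N by apply: nw_count nu Cu.
have uAA := nw_n_XX cA. have uBB := nw_n_XX cB. have uCC := nw_n_XX cC.
have vAA : nw_n w' A A = 0 by apply: nw_n_XX; rewrite -cw.
have vBB : nw_n w' B B = 0 by apply: nw_n_XX; rewrite -cw.
have vCC : nw_n w' C C = 0 by apply: nw_n_XX; rewrite -cw.
have restE : forall X, X \in [:: A; B; C] ->
    \sum_(E <- undup w | E \notin [:: A; B; C]) << nw_n w X E *g p E >> =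
    \sum_(E <- undup w | E \notin [:: A; B; C]) << nw_n w' X E *g p E >>.
  move=> X _; rewrite big_seq_cond [RHS]big_seq_cond; apply: eq_bigr => E /andP [].
  by rewrite mem_undup => Eu nE; case: (outside E Eu nE) => _ _ ->.
have clsE : forall X, X \in [:: A; B; C] -> cls w p X = cls w' p X.
  move=> X XA; rewrite clsw' /cls !spl (restE X XA); congr (_ + _).
  move: XA; rewrite !inE => /or3P [] /eqP ->.
  - by rewrite uAA uAB uAC vAA vAB vAC /= -pBC -pAB !freegU0 !add0r !addr0.
  - by rewrite uBA uBB uBC vBA vBB vBC /= -pBC -pAB !freegU0 !add0r !addr0 freegUD addNr freegU0.
  - by rewrite uCA uCB uCC vCA vCB vCC /= -pBC -pAB !freegU0 !add0r !addr0.
have clsO : forall D, D \in w -> D \notin [:: A; B; C] -> cls w p D = cls w' p D.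
  move=> D Du nD; rewrite clsw' /cls; apply: eq_big_seq => E _.
  by case: (outside D Du nD) => _ -> _.
have clsB : cls w p B = cls w p A + cls w p C.
  rewrite /cls !spl.
  have -> : \sum_(E <- undup w | E \notin [:: A; B; C]) << nw_n w B E *g p E >> =
      \sum_(E <- undup w | E \notin [:: A; B; C]) << nw_n w A E *g p E >> +
      \sum_(E <- undup w | E \notin [:: A; B; C]) << nw_n w C E *g p E >>.
    rewrite -big_split /= big_seq_cond [RHS]big_seq_cond; apply: eq_bigr => E /andP [].
    rewrite mem_undup => Eu nE; rewrite freegUD.
    by case: (outside E Eu nE) => ->.
  rewrite uAA uAB uAC uBA uBB uBC uCA uCB uCC /= -pBC -pAB !freegU0 !add0r !addr0.
  by rewrite freegUD addNr freegU0 add0r [RHS]addrACA freegUD subrr freegU0 add0r.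
have -> : nw_proj {| nw_word := w; nw_proj := p |} = p by [].
set Ku := K (Nanoword w p).
set Kv := K (Nanoword w' p).
have HpE : forall X, X \in [:: A; B; C] -> H (p X) = H (p A).
  by move=> X; rewrite !inE => /or3P [] /eqP ->; rewrite // -?pBC -?pAB.
have KuE : forall X, X \in [:: A; B; C] -> Ku X = (to_pi tau (cls w p X) \in H (p A)).
  by move=> X XA; rewrite /Ku /K letter_classE /= HpE.
have [h1 hmul hinv] := HH.1 (p A).
have iA : A \in [:: A; B; C] by rewrite mem_head.
have KuA := KuE A iA. have KuB := KuE B iB. have KuC := KuE C iC.
have KB : Ku A -> Ku C -> Ku B.
  by rewrite KuA KuB KuC clsB -pi_mulE; exact: hmul.
have KC : Ku A -> Ku B -> Ku C.
  rewrite KuA KuB KuC => hA hB.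
  have -> : cls w p C = cls w p B + - cls w p A by rewrite clsB addrAC subrr add0r.
  by rewrite -pi_mulE -pi_invE; apply: hmul => //; apply: hinv.
have KA : Ku B -> Ku C -> Ku A.
  rewrite KuA KuB KuC => hB hC.
  have -> : cls w p A = cls w p B + - cls w p C by rewrite clsB addrK.
  by rewrite -pi_mulE -pi_invE; apply: hmul => //; apply: hinv.
have KvE : forall X, X \in w -> Kv X = Ku X.
  move=> X Xw; rewrite /Kv /Ku /K !letter_classE /=.
  by case: (boolP (X \in [:: A; B; C])) => XA; [rewrite clsE | rewrite clsO].
have fv' : filter Kv w' = filter Ku w'.
  by apply: eq_in_filter => X; rewrite -memw; exact: KvE.
case: (boolP [&& Ku A, Ku B & Ku C]) => [/and3P [kA kB kC] | nall].
- apply: rst_step; split; try exact: cov_nano.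
  apply: Or44; split; first by [].
  exists (filter Ku x), (filter Ku y), (filter Ku z), (filter Ku t), A, B, C; split => //.
  + by rewrite covE /= [X in filter _ X]eu !filter_cat /= -/Ku kA kB kC.
  + by rewrite covE /= -/Kv fv' /w' !filter_cat /= kA kB kC.
- have nAB' : ~~ (Ku A && Ku B).
    by apply: contra nall => /andP [a b]; rewrite a b (KC a b).
  have nAC' : ~~ (Ku A && Ku C).
    by apply: contra nall => /andP [a c]; rewrite a c (KB a c).
  have nBC' : ~~ (Ku B && Ku C).
    by apply: contra nall => /andP [b c]; rewrite b c (KA b c).
  have -> : covering H (Nanoword w' p) = covering H (Nanoword w p).
    rewrite !covE /= -/Kv -/Ku fv'; congr Nanoword; rewrite /w' eu !filter_cat.
    by rewrite (@filter_swap Ku A B nAB') (@filter_swap Ku A C nAC') (@filter_swap Ku B C nBC').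
  exact: rst_refl.
Qed.

Lemma cov_iso u v : is_nanoword u -> is_nanoword v -> nw_iso u v ->
  nw_step tau (covering H u) (covering H v).
Proof.
move=> nu nv [f [finj emap eproj]].
split; try exact: cov_nano.
apply: Or41.
move: u v nu nv finj emap eproj => [w p] [w2 q] nu nv /= finj emap eproj.
subst w2.
pose g y := nth 0%N w (index y (map f w)).
have gf : {in w, forall a, g (f a) = a} by move=> a aw; exact: nth_index_map.
have mK : forall s, {subset s <= w} -> map g (map f s) = s.
  by move=> s ss; rewrite -map_comp map_id_in // => a /ss /gf.
have subE : forall s, {subset s <= w} -> subseq (map f s) (map f w) = subseq s w.
  move=> s ss; apply/idP/idP; last exact: map_subseq.
  by move/(map_subseq g); rewrite !mK.
have nmap : forall a b, a \in w -> b \in w -> nw_n (map f w) (f a) (f b) = nw_n w a b.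
  move=> a b aw bw; rewrite /nw_n.
  have s1 : {subset [:: a; b; a; b] <= w} by move=> c; rewrite !inE => /or4P [] /eqP ->.
  have s2 : {subset [:: b; a; b; a] <= w} by move=> c; rewrite !inE => /or4P [] /eqP ->.
  by rewrite -(subE _ s1) -(subE _ s2).
have clsE : forall a, a \in w -> cls (map f w) q (f a) = cls w p a.
  move=> a aw; rewrite /cls (@sum_sub _ (map f w) (map f (undup w))).
  - rewrite big_map; apply: eq_big_seq => b; rewrite mem_undup => bw.
    by rewrite nmap // eproj.
  - by rewrite map_inj_in_uniq ?undup_uniq // => c d; rewrite !mem_undup; exact: finj.
  - by move=> c /mapP [d dw ->]; apply: map_f; rewrite mem_undup.
  - by move=> c cw; rewrite nw_n_notinr // freegU0.
have KE : forall a, a \in w -> K (Nanoword (map f w) q) (f a) = K (Nanoword w p) a.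
  by move=> a aw; rewrite /K !letter_classE /= clsE // eproj.
exists f; split.
- by move=> a b /=; rewrite !mem_filter => /andP [_ aw] /andP [_ bw]; exact: finj.
- rewrite /= filter_map; congr map; apply: eq_in_filter => a aw /=.
  exact: (esym (KE a aw)).
- by move=> a /=; rewrite mem_filter => /andP [_ aw]; exact: eproj.
Qed.


End Main.

Theorem lemma5p1 (alpha : choiceType) (tau : alpha -> alpha)
    (Htau : involutive tau) (H : alpha -> pred (pigrp tau))
    (HH : alpha_family H) (u v : nanoword alpha) :
  is_nanoword u -> is_nanoword v -> homotopic tau u v ->
  homotopic tau (covering H u) (covering H v).
Proof.
move=> _ _; rewrite /homotopic => h.
elim: h => [a b st|a|a b _ IH|a b c _ IH1 _ IH2].
- case: (st) => na nb [] st'.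
  + by apply: rst_step; exact: cov_iso.
  + by apply: rst_step; exact: cov_move1.
  + exact: cov_move2.
  + exact: cov_move3.
- exact: rst_refl.
- exact: rst_sym.
- exact: rst_trans IH1 IH2.
Qed.
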